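(* Assume $CA_2$. Then there is a Suslin $\omega_1$-pretower, i.e. an $\omega_1$-pretower $\mathcal T$ on a countable set such that every uncountable $\mathcal A\subseteq\mathcal T$ contains distinct $A,B$ with $A\subseteq B$.
   Context: An $\omega_1$-pretower on a countably infinite set $X$ is a family $\mathcal T\subseteq[X]^\omega$ well ordered by $\subsetneq^*$ (where $A\subsetneq^*B$ means $A\setminus B$ is finite and $B\setminus A$ is infinite) with order type $\omega_1$. A type is a sequence $\tau=\{(m_k,n_{k+1},r_{k+1})\}_{k\in\omega}$ of natural numbers with $m_0=1$; $n_k\ge2$ for $k\ge1$; every $r\in\omega$ equals $r_k$ for infinitely many $k$; $m_k>r_{k+1}$; and $m_{k+1}=r_{k+1}+(m_k-r_{k+1})n_{k+1}$ for all $k$. For a set of ordinals $X$ and $\mathcal F\subseteq[X]^{<\omega}$, $\mathcal F_k$ is the set of elements of rank $k$ in $(\mathcal F,\subsetneq)$; $A\sqsubseteq B$ means $A\subseteq B$ and every element of $B$ below an element of $A$ is in $A$; $A<B$ means every element of $A$ is below every element of $B$. $\mathcal F$ is a construction scheme over $X$ of type $\tau$ if (1) every finite subset of $X$ lies in a member of $\mathcal F$; (2) $|F|=m_k$ for $F\in\mathcal F_k$; (3) $E\cap F\sqsubseteq E,F$ for $E,F\in\mathcal F_k$; (4) each $F\in\mathcal F_{k+1}$ is the union of uniquely determined $F_0,\dots,F_{n_{k+1}-1}\in\mathcal F_k$ forming a $\Delta$-system with root $R(F)$, $|R(F)|=r_{k+1}$, $R(F)<F_0\setminus R(F)<\dots<F_{n_{k+1}-1}\setminus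 R(F)$. For a construction scheme $\mathcal F$ over $\omega_1$, $l\ge1$, $F\in\mathcal F_l$ and finite $\mathcal C\subseteq[\omega_1]^{<\omega}$: $F$ captures $\mathcal C$ if $|\mathcal C|\le n_l$ and $\mathcal C$ can be enumerated as $\{c_i\}_{i<|\mathcal C|}$ with $c_i\subseteq F_i$, $c_i\setminus R(F)\neq\emptyset$ and $\phi_i[c_0]=c_i$ where $\phi_i:F_0\to F_i$ is the increasing bijection. $\mathcal F$ is $n$-capturing if for every uncountable $S\subseteq[\omega_1]^{<\omega}$ and every $k\in\omega$ there are $\mathcal C\in[S]^n$, $l>k$ and $F\in\mathcal F_l$ capturing $\mathcal C$. $CA_n$ is the statement: for every type $\tau$ with $n\le n_k$ for all $k\ge1$ there is an $n$-capturing construction scheme over $\omega_1$ of type $\tau$. *)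

(* Defs.v *)
From Stdlib Require Import List Arith Sorting.Sorted Sorting.Permutation.
Import ListNotations.

Definition countable {U : Type} (P : U -> Prop) : Prop :=
  exists f : U -> nat, forall x y, P x -> P y -> f x = f y -> x = y.
Definition uncountable {U : Type} (P : U -> Prop) : Prop := ~ countable P.

Definition omega1_like {W : Type} (lt : W -> W -> Prop) : Prop :=
  (forall x, ~ lt x x) /\
  (forall x y z, lt x y -> lt y z -> lt x z) /\
  (forall x y, lt x y \/ x = y \/ lt y x) /\
  well_founded lt /\
  uncountable (fun _ : W => True) /\
  (forall x, countable (fun y => lt y x)).

Definition infinite_nat (A : nat -> Prop) : Prop :=
  forall n, exists m, n <= m /\ A m.
Definition finite_nat (A : nat -> Prop) : Prop :=
  exists n, forall m, A m -> m < n.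
Definition almost_psub (A B : nat -> Prop) : Prop :=
  finite_nat (fun x => A x /\ ~ B x) /\ infinite_nat (fun x => B x /\ ~ A x).

Definition omega1_pretower (T : (nat -> Prop) -> Prop) : Prop :=
  (forall A, T A -> infinite_nat A) /\
  (forall A B, T A -> T B -> A <> B -> almost_psub A B \/ almost_psub B A) /\
  well_founded (fun A B => T A /\ T B /\ almost_psub A B) /\
  uncountable T /\
  (forall A, T A -> countable (fun B => T B /\ almost_psub B A)).

Definition suslin (T : (nat -> Prop) -> Prop) : Prop :=
  forall AA : (nat -> Prop) -> Prop,
    (forall A, AA A -> T A) -> uncountable AA ->
    exists A B, AA A /\ AA B /\ A <> B /\ (forall x, A x -> B x).

(** A type {(m_k, n_{k+1}, r_{k+1})}_k; the values tn 0 and tr 0 are unused. *)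
Record cs_type := { tm : nat -> nat; tn : nat -> nat; tr : nat -> nat }.

Definition is_type (t : cs_type) : Prop :=
  tm t 0 = 1 /\
  (forall k, 1 <= k -> 2 <= tn t k) /\
  (forall r N, exists k, N <= k /\ tr t k = r) /\
  (forall k, tr t (S k) < tm t k) /\
  (forall k, tm t (S k) = tr t (S k) + (tm t k - tr t (S k)) * tn t (S k)).

Section CS.
Context {W : Type} (lt : W -> W -> Prop).

(** finite subsets of W are represented canonically by lt-increasing lists *)
Definition incr (l : list W) : Prop := StronglySorted lt l.

Definition psub (E F : list W) : Prop := incl E F /\ ~ incl F E.

Definition chain_below (Fam : list W -> Prop) (F : list W) (k : nat) : Prop :=
  exists ch : list (list W),
    length ch = k /\ Forall Fam ch /\ Sorted psub (ch ++ [F]).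

Definition rank (Fam : list W -> Prop) (F : list W) (k : nat) : Prop :=
  Fam F /\ chain_below Fam F k /\ ~ chain_below Fam F (S k).

Definition lt_sets (A B : W -> Prop) : Prop :=
  forall x y, A x -> B y -> lt x y.

Definition init_seg (A : W -> Prop) (B : list W) : Prop :=
  (forall x, A x -> In x B) /\
  (forall x y, A x -> In y B -> lt y x -> A y).

(** F in Fam_{k+1} is the union of Fs = [F_0; ...; F_{n_{k+1}-1}] in Fam_k
    forming a Delta-system with root R, |R| = r_{k+1},
    R < F_0 \ R < ... < F_{n_{k+1}-1} \ R. *)
Definition decomp (Fam : list W -> Prop) (t : cs_type) (k : nat)
    (F : list W) (Fs : list (list W)) (R : list W) : Prop :=
  length Fs = tn t (S k) /\
  Forall (fun E => rank Fam E k) Fs /\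
  (forall x, In x F <-> exists E, In E Fs /\ In x E) /\
  (forall i j Ei Ej, i <> j -> nth_error Fs i = Some Ei ->
     nth_error Fs j = Some Ej -> forall x, (In x Ei /\ In x Ej) <-> In x R) /\
  incr R /\ length R = tr t (S k) /\
  (forall E0, nth_error Fs 0 = Some E0 ->
     lt_sets (fun x => In x R) (fun x => In x E0 /\ ~ In x R)) /\
  (forall i Ei Ej, nth_error Fs i = Some Ei -> nth_error Fs (S i) = Some Ej ->
     lt_sets (fun x => In x Ei /\ ~ In x R) (fun x => In x Ej /\ ~ In x R)).

Definition construction_scheme (t : cs_type) (Fam : list W -> Prop) : Prop :=
  (forall F, Fam F -> incr F) /\
  (forall l : list W, exists F, Fam F /\ incl l F) /\
  (forall k F, rank Fam F k -> length F = tm t k) /\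
  (forall k E F, rank Fam E k -> rank Fam F k ->
     init_seg (fun x => In x E /\ In x F) E /\
     init_seg (fun x => In x E /\ In x F) F) /\
  (forall k F, rank Fam F (S k) ->
     exists Fs R, decomp Fam t k F Fs R /\
       forall Fs' R', decomp Fam t k F Fs' R' -> Fs' = Fs /\ R' = R).

(** x is in phi_i[c0], where phi_i : F0 -> Fi is the increasing bijection *)
Definition phi_image (F0 Fi c0 : list W) (x : W) : Prop :=
  exists j y, nth_error F0 j = Some y /\ In y c0 /\ nth_error Fi j = Some x.

Definition captures (Fam : list W -> Prop) (t : cs_type) (l : nat)
    (F : list W) (C : list (list W)) : Prop :=
  1 <= l /\ rank Fam F l /\ NoDup C /\ length C <= tn t l /\
  exists Fs R, decomp Fam t (l - 1) F Fs R /\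
    exists cs, Permutation C cs /\
      (forall i ci, nth_error cs i = Some ci ->
         exists Fi, nth_error Fs i = Some Fi /\ incl ci Fi /\
           (exists x, In x ci /\ ~ In x R) /\
           exists c0 F0, nth_error cs 0 = Some c0 /\ nth_error Fs 0 = Some F0 /\
             (forall x, In x ci <-> phi_image F0 Fi c0 x)).

Definition n_capturing (Fam : list W -> Prop) (t : cs_type) (n : nat) : Prop :=
  forall S : list W -> Prop, (forall c, S c -> incr c) -> uncountable S ->
  forall k, exists (C : list (list W)) (l : nat) (F : list W),
    NoDup C /\ length C = n /\ Forall S C /\ k < l /\ captures Fam t l F C.

Definition CA (n : nat) : Prop :=
  forall t : cs_type, is_type t -> (forall k, 1 <= k -> n <= tn t k) ->
    exists Fam : list W -> Prop, construction_scheme t Fam /\ n_capturing Fam t n.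

End CS.

(* Main.v *)
Require Import Defs.
From Stdlib Require Import List Arith Lia Sorting.Sorted Sorting.Permutation Classical ClassicalEpsilon Cantor.
Import ListNotations.

Section Lists.
Context {W : Type} (lt : W -> W -> Prop).
Hypothesis irr : forall x, ~ lt x x.
Hypothesis trn : forall x y z, lt x y -> lt y z -> lt x z.

Lemma ss_app (l1 l2 : list W) :
  StronglySorted lt (l1 ++ l2) <->
  StronglySorted lt l1 /\ StronglySorted lt l2 /\
  (forall x y, In x l1 -> In y l2 -> lt x y).
Proof.
  induction l1 as [|a l1 IH]; simpl.
  - split; [intros H; repeat split; auto; [constructor|intros ? ? []]| intros (_&H&_); exact H].
  - split.
    + intros H. apply StronglySorted_inv in H as [H1 H2].
      apply IH in H1 as (A&B&C). rewrite Forall_forall in H2.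
      repeat split; auto.
      * constructor; auto. rewrite Forall_forall; intros; apply H2, in_or_app; auto.
      * intros x y [<-|Hx] Hy; auto. apply H2, in_or_app; auto.
    + intros (A&B&C). apply StronglySorted_inv in A as [A1 A2].
      constructor.
      * apply IH; repeat split; auto.
      * rewrite Forall_forall in *. intros x Hx. apply in_app_or in Hx as [Hx|Hx]; auto.
Qed.

Lemma ss_nodup (l : list W) : StronglySorted lt l -> NoDup l.
Proof.
  induction 1 as [|a l H IH HF]; constructor; auto.
  rewrite Forall_forall in HF. intros Hin. apply (irr a); auto.
Qed.

Lemma ss_eq (l1 l2 : list W) : StronglySorted lt l1 -> StronglySorted lt l2 ->
  (forall x, In x l1 <-> In x l2) -> l1 = l2.
Proof.
  revert l2. induction l1 as [|a l1 IH]; intros [|b l2] H1 H2 E.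
  - reflexivity.
  - exfalso. apply (E b). left; auto.
  - exfalso. apply (E a). left; auto.
  - apply StronglySorted_inv in H1 as [H1 F1]. apply StronglySorted_inv in H2 as [H2 F2].
    rewrite Forall_forall in F1, F2.
    assert (ab : a = b).
    { destruct (proj1 (E a) (or_introl eq_refl)) as [->|Ha]; auto.
      destruct (proj2 (E b) (or_introl eq_refl)) as [->|Hb]; auto.
      exfalso. apply (irr a). apply trn with b; auto. }
    subst b. f_equal. apply IH; auto.
    intros x. split; intros Hx.
    + destruct (proj1 (E x) (or_intror Hx)) as [->|Hx']; auto.
      exfalso; apply (irr x); auto.
    + destruct (proj2 (E x) (or_intror Hx)) as [->|Hx']; auto.
      exfalso; apply (irr x); auto.
Qed.

Lemma ss_nth_lt (l : list W) : StronglySorted lt l -> forall i j a b,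
  nth_error l i = Some a -> nth_error l j = Some b -> i < j -> lt a b.
Proof.
  induction 1 as [|c l H IH HF]; intros i j a b Ha Hb Hij.
  - destruct i; discriminate.
  - destruct j as [|j]; [lia|]. destruct i as [|i]; simpl in *.
    + injection Ha as <-. rewrite Forall_forall in HF. apply HF.
      eapply nth_error_In; eauto.
    + apply (IH i j); auto; lia.
Qed.

Lemma ss_nth_order (l : list W) : StronglySorted lt l -> forall i j a b,
  nth_error l i = Some a -> nth_error l j = Some b -> lt a b -> i < j.
Proof.
  intros H i j a b Ha Hb Hab.
  destruct (Nat.lt_trichotomy i j) as [?|[->|?]]; auto.
  - rewrite Ha in Hb; injection Hb as ->. exfalso; apply (irr b); auto.
  - exfalso. apply (irr a). apply trn with b; auto. eapply ss_nth_lt; eauto.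
Qed.

Lemma ss_prefix (l1 l2 : list W) x : StronglySorted lt (l1 ++ x :: l2) ->
  forall y, In y l1 <-> (In y (l1 ++ x :: l2) /\ lt y x).
Proof.
  intros H y. apply ss_app in H as (A&B&C). split.
  - intros Hy. split; [apply in_or_app; auto|]. apply C; simpl; auto.
  - intros [Hy Hyx]. apply in_app_or in Hy as [Hy|[->|Hy]]; auto.
    + exfalso; apply (irr y); auto.
    + exfalso. apply StronglySorted_inv in B as [_ B]. rewrite Forall_forall in B.
      apply (irr x). apply trn with y; auto.
Qed.

Lemma ss_filter (f : W -> bool) (l : list W) : StronglySorted lt l -> StronglySorted lt (filter f l).
Proof.
  induction 1 as [|a l H IH HF]; simpl; [constructor|].
  destruct (f a); auto. constructor; auto.
  rewrite Forall_forall in *. intros x Hx. apply filter_In in Hx as [Hx _]; auto.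
Qed.

Definition blt (d d' : list W) : Prop := forall x y, In x d -> In y d' -> lt x y.

Lemma ss_concat (B : list (list W)) : Forall (StronglySorted lt) B ->
  StronglySorted blt B -> StronglySorted lt (concat B).
Proof.
  intros HF HS. induction HS as [|d B HS IH HF2]; simpl; [constructor|].
  inversion HF; subst. apply ss_app; repeat split; auto.
  intros x y Hx Hy. apply in_concat in Hy as (d'&Hd'&Hy).
  rewrite Forall_forall in HF2. apply (HF2 d'); auto.
Qed.

Definition bltne (d d' : list W) : Prop := d <> [] /\ d' <> [] /\ blt d d'.

Lemma bltne_trans : Relations_1.Transitive bltne.
Proof.
  intros a b c (A1&A2&A3) (B1&B2&B3). repeat split; auto.
  intros x y Hx Hy. destruct b as [|z b]; [congruence|].
  apply trn with z; [apply A3|apply B3]; simpl; auto.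
Qed.

Lemma sorted_of_nth {A : Type} (R : A -> A -> Prop) (l : list A) :
  (forall i a b, nth_error l i = Some a -> nth_error l (S i) = Some b -> R a b) ->
  Sorted R l.
Proof.
  induction l as [|a l IH]; intros H; constructor.
  - apply IH. intros i x y Hx Hy. apply (H (S i)); auto.
  - destruct l as [|b l]; constructor. apply (H 0); reflexivity.
Qed.

End Lists.

Lemma concat_blocks {A : Type} (B B' : list (list A)) :
  length B = length B' ->
  (forall i d d', nth_error B i = Some d -> nth_error B' i = Some d' -> length d = length d') ->
  forall j x, nth_error (concat B) j = Some x ->
  exists a d d' t, nth_error B a = Some d /\ nth_error B' a = Some d' /\
    nth_error d t = Some x /\ nth_error (concat B') j = nth_error d' t.
Proof.
  revert B'. induction B as [|d B IH]; intros [|d' B'] HL HD j x Hj; simpl in *; try discriminate.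
  - destruct j; discriminate.
  - assert (Hdd : length d = length d') by (apply (HD 0); reflexivity).
    destruct (Nat.lt_ge_cases j (length d)) as [Hlt|Hge].
    + rewrite nth_error_app1 in Hj by lia. exists 0, d, d', j. repeat split; auto.
      rewrite nth_error_app1 by lia. reflexivity.
    + rewrite nth_error_app2 in Hj by lia.
      destruct (IH B' ltac:(lia) (fun i => HD (S i)) _ _ Hj) as (a&e&e'&t&H1&H2&H3&H4).
      exists (S a), e, e', t. repeat split; auto.
      rewrite nth_error_app2 by lia. rewrite <- Hdd. exact H4.
Qed.

Section Scheme.
Context {W : Type} (lt : W -> W -> Prop).
Hypothesis irr : forall x, ~ lt x x.
Hypothesis trn : forall x y z, lt x y -> lt y z -> lt x z.
Context (t : cs_type) (Ht : is_type t) (Fam : list W -> Prop)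
  (HCS : construction_scheme lt t Fam).

Definition pos k x j := exists G, rank Fam G k /\ nth_error G j = Some x.

Lemma rank_incr G k : rank Fam G k -> incr lt G.
Proof. intros [HF _]. destruct HCS as [C1 _]. auto. Qed.

Lemma rank_len G k : rank Fam G k -> length G = tm t k.
Proof. destruct HCS as (_&_&C3&_). apply C3. Qed.

Lemma pos_unique k x j j' : pos k x j -> pos k x j' -> j = j'.
Proof.
  intros (G&HG&Hj) (G'&HG'&Hj').
  destruct HCS as (_&_&_&C4&_).
  destruct (C4 k G G' HG HG') as [[_ I1] [_ I2]].
  pose proof (rank_incr _ _ HG) as S1. pose proof (rank_incr _ _ HG') as S2.
  destruct (nth_error_split _ _ Hj) as (l1&l2&E1&L1).
  destruct (nth_error_split _ _ Hj') as (l1'&l2'&E1'&L1').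
  assert (l1 = l1').
  { unfold incr in *. rewrite E1 in S1. rewrite E1' in S2.
    apply (ss_eq lt irr trn).
    - apply ss_app in S1 as (?&_&_); auto.
    - apply ss_app in S2 as (?&_&_); auto.
    - intros y. rewrite (ss_prefix lt irr trn _ _ _ S1 y), (ss_prefix lt irr trn _ _ _ S2 y).
      assert (xG : In x G) by (eapply nth_error_In; eauto).
      assert (xG' : In x G') by (eapply nth_error_In; eauto).
      rewrite <- E1, <- E1'. split; intros [Hy Hyx]; split; auto.
      + apply (I1 x y); auto.
      + apply (I2 x y); auto. }
  subst; congruence.
Qed.

Lemma psub_len (a b : list W) : NoDup a -> NoDup b -> psub a b -> length a < length b.
Proof.
  intros Na Nb [H1 H2]. pose proof (NoDup_incl_length Na H1).
  destruct (Nat.eq_dec (length a) (length b)) as [E|E]; [|lia].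
  exfalso. apply H2. apply NoDup_length_incl; auto. lia.
Qed.

Lemma chain_aux (rest : list (list W)) : forall x0 F,
  Sorted psub (x0 :: rest ++ [F]) -> Forall (@NoDup W) (x0 :: rest) -> NoDup F ->
  length x0 + length rest < length F.
Proof.
  induction rest as [|y rest IH]; intros x0 F HS HN NF; simpl in *;
    apply Sorted_inv in HS as [HS1 HS2]; apply HdRel_inv in HS2;
    pose proof (Forall_inv HN) as N0; apply Forall_inv_tail in HN.
  - pose proof (psub_len _ _ N0 NF HS2). lia.
  - pose proof (Forall_inv HN) as N1.
    pose proof (psub_len _ _ N0 N1 HS2). specialize (IH y F HS1 HN NF). lia.
Qed.

Lemma chain_len F c : Fam F -> chain_below Fam F c -> c <= length F.
Proof.
  intros HF (ch&Lc&Fc&Sc). destruct HCS as (C1&_).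
  assert (NF : NoDup F) by (apply (ss_nodup lt irr), C1; auto).
  destruct ch as [|x0 rest]; simpl in *; [lia|].
  assert (Forall (@NoDup W) (x0 :: rest)).
  { rewrite Forall_forall in *. intros y Hy. apply (ss_nodup lt irr), C1; auto. }
  pose proof (chain_aux rest x0 F Sc H NF). lia.
Qed.

Lemma bounded_max (P : nat -> Prop) N : P 0 -> (forall c, P c -> c <= N) ->
  exists c, P c /\ ~ P (S c).
Proof.
  intros H0 HB. apply NNPP. intros Hn.
  assert (forall c, P c) as Hall.
  { induction c; auto. apply NNPP. intros Hc. apply Hn. exists c; auto. }
  specialize (HB (S N) (Hall _)). lia.
Qed.

Lemma has_rank F : Fam F -> exists m, rank Fam F m.
Proof.
  intros HF. destruct (bounded_max (chain_below Fam F) (length F)) as (c&H1&H2).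
  - exists []. repeat split; auto. simpl. repeat constructor.
  - intros c; apply chain_len; auto.
  - exists c. repeat split; auto.
Qed.

Lemma tm_inc k : tm t k < tm t (S k).
Proof.
  destruct Ht as (_&T2&_&T4&T5). rewrite T5. specialize (T4 k). specialize (T2 (S k) ltac:(lia)).
  nia.
Qed.

Lemma tm_mono k k' : k <= k' -> tm t k <= tm t k'.
Proof.
  induction 1; auto. pose proof (tm_inc m). lia.
Qed.

Lemma tm_ge k : S k <= tm t k.
Proof.
  induction k. destruct Ht as (T1&_). lia. pose proof (tm_inc k). lia.
Qed.

Lemma decomp_in k F Fs R x : decomp lt Fam t k F Fs R -> In x F -> exists E, In E Fs /\ In x E.
Proof. intros (_&_&U&_) Hx. apply U; auto. Qed.

Lemma decomp_incl k F Fs R E : decomp lt Fam t k F Fs R -> In E Fs -> incl E F.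
Proof. intros (_&_&U&_) HE x Hx. apply U. eauto. Qed.

Lemma decomp_rank k F Fs R E : decomp lt Fam t k F Fs R -> In E Fs -> rank Fam E k.
Proof. intros (_&HF&_) HE. rewrite Forall_forall in HF; auto. Qed.

Lemma descend k d : forall H x, rank Fam H (d + k) -> In x H ->
  exists G, rank Fam G k /\ In x G /\ incl G H.
Proof.
  induction d as [|d IH]; intros H x HH Hx; simpl in *.
  - exists H; split; [|split]; auto. apply incl_refl.
  - destruct HCS as (_&_&_&_&C5). destruct (C5 _ _ HH) as (Fs&R&HD&_).
    destruct (decomp_in _ _ _ _ _ HD Hx) as (E&HE&xE).
    destruct (IH E x (decomp_rank _ _ _ _ _ HD HE) xE) as (G&G1&G2&G3).
    exists G; split; [|split]; auto. eapply incl_tran; eauto. eapply decomp_incl; eauto.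
Qed.

Hypothesis Hunc : uncountable (fun _ : W => True).

Lemma big_list N : exists l : list W, NoDup l /\ length l = N.
Proof.
  induction N as [|N (l&Nl&Ll)].
  - exists []; split; auto. constructor.
  - destruct (classic (exists w, ~ In w l)) as [(w&Hw)|Hn].
    + exists (w :: l). split; simpl; auto. constructor; auto.
    + exfalso. apply Hunc.
      exists (fun w => epsilon (inhabits 0) (fun j => nth_error l j = Some w)).
      intros x y _ _ E.
      assert (Hx : In x l) by (apply NNPP; intro Hc; apply Hn; eauto).
      assert (Hy : In y l) by (apply NNPP; intro Hc; apply Hn; eauto).
      apply In_nth_error in Hx as (i&Hi). apply In_nth_error in Hy as (j&Hj).
      pose proof (epsilon_spec (inhabits 0) (fun j => nth_error l j = Some x) (ex_intro _ i Hi)).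
      pose proof (epsilon_spec (inhabits 0) (fun j => nth_error l j = Some y) (ex_intro _ j Hj)).
      simpl in *. rewrite E in H. congruence.
Qed.

Lemma exists_high l k : exists H m, rank Fam H m /\ k <= m /\ incl l H.
Proof.
  destruct (big_list (S (tm t k))) as (L&NL&LL).
  destruct HCS as (_&C2&_). destruct (C2 (l ++ L)) as (H&FH&IH).
  destruct (has_rank H FH) as (m&Hm). exists H, m. split; [exact Hm|split].
  - destruct (Nat.le_gt_cases k m) as [?|Hlt]; auto. exfalso.
    assert (HLH : length L <= length H).
    { apply NoDup_incl_length; auto. intros x Hx; apply IH, in_or_app; auto. }
    rewrite (rank_len _ _ Hm) in HLH. pose proof (tm_mono m k ltac:(lia)). lia.
  - intros x Hx; apply IH, in_or_app; auto.
Qed.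

Lemma level x k : exists G, rank Fam G k /\ In x G.
Proof.
  destruct (exists_high [x] k) as (H&m&Hm&km&Hi).
  replace m with ((m - k) + k) in Hm by lia.
  destruct (descend k (m - k) H x Hm (Hi x (or_introl eq_refl))) as (G&?&?&_). eauto.
Qed.

Lemma together a b E K k : lt a b -> rank Fam E K -> In a E -> In b E -> K <= k ->
  exists G, rank Fam G k /\ In a G /\ In b G.
Proof.
  intros ab HE aE bE Kk.
  destruct (exists_high [b] k) as (H&m&Hm&km&Hi).
  replace m with ((m - k) + k) in Hm by lia.
  destruct (descend k (m - k) H b Hm (Hi b (or_introl eq_refl))) as (G&HG&bG&_).
  replace k with ((k - K) + K) in HG by lia.
  destruct (descend K (k - K) G b HG bG) as (P&HP&bP&PG).
  replace (k - K + K) with k in HG by lia.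
  exists G. split; [exact HG|split]; auto. apply PG.
  destruct HCS as (_&_&_&C4&_). destruct (C4 K E P HE HP) as [[_ I1] _].
  destruct (I1 b a) as [_ ?]; auto.
Qed.

End Scheme.

Lemma ss_weaken {A : Type} (R R' : A -> A -> Prop) l :
  (forall a b, R a b -> R' a b) -> StronglySorted R l -> StronglySorted R' l.
Proof.
  intros HR. induction 1; constructor; auto.
  rewrite Forall_forall in *; auto.
Qed.

Section Scheme3.
Context {W : Type} (lt : W -> W -> Prop).
Hypothesis irr : forall x, ~ lt x x.
Hypothesis trn : forall x y z, lt x y -> lt y z -> lt x z.
Context (t : cs_type) (Ht : is_type t) (Fam : list W -> Prop)
  (HCS : construction_scheme lt t Fam).

Definition Dl (R E : list W) : list W :=
  filter (fun x => if excluded_middle_informative (In x R) then false else true) E.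

Lemma In_Dl R E x : In x (Dl R E) <-> In x E /\ ~ In x R.
Proof.
  unfold Dl. rewrite filter_In.
  destruct (excluded_middle_informative (In x R)); intuition congruence.
Qed.

Lemma decomp_struct k E Es R : rank Fam E (S k) -> decomp lt Fam t k E Es R ->
  (forall b Eb, nth_error Es b = Some Eb ->
      Eb = R ++ Dl R Eb /\ length (Dl R Eb) = tm t k - tr t (S k))
  /\ E = R ++ concat (map (Dl R) Es)
  /\ length Es = tn t (S k) /\ length R = tr t (S k).
Proof.
  intros HE HD. pose proof HD as (HL&HF&HU&HI&HR&HLR&H0&Hc).
  destruct Ht as (_&T2&_&T4&_).
  assert (n2 : 2 <= length Es) by (rewrite HL; apply T2; lia).
  assert (Hrank : forall b Eb, nth_error Es b = Some Eb -> rank Fam Eb k).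
  { intros b Eb Hb. eapply decomp_rank; eauto. eapply nth_error_In; eauto. }
  assert (Rsub : forall b Eb, nth_error Es b = Some Eb -> incl R Eb).
  { intros b Eb Hb x Hx.
    set (b' := if Nat.eq_dec b 0 then 1 else 0).
    assert (b' < length Es) by (unfold b'; destruct (Nat.eq_dec b 0); lia).
    destruct (nth_error Es b') as [Eb'|] eqn:Hb'.
    2:{ apply nth_error_None in Hb'. lia. }
    assert (b <> b') by (unfold b'; destruct (Nat.eq_dec b 0); lia).
    apply (HI b b' Eb Eb'); auto. }
  assert (Dne : forall b Eb, nth_error Es b = Some Eb -> Dl R Eb <> []).
  { intros b Eb Hb Hn.
    assert (incl Eb R).
    { intros x Hx. apply NNPP. intros Hx'.
      assert (In x (Dl R Eb)) by (apply In_Dl; auto). rewrite Hn in H; contradiction. }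
    pose proof (NoDup_incl_length (ss_nodup lt irr _ (rank_incr lt t Fam HCS _ _ (Hrank _ _ Hb))) H).
    rewrite (rank_len lt t Fam HCS _ _ (Hrank _ _ Hb)), HLR in H1. specialize (T4 k). lia. }
  assert (SB : StronglySorted (bltne lt) (map (Dl R) Es)).
  { apply Sorted_StronglySorted; [apply bltne_trans; auto|].
    apply sorted_of_nth. intros i a b Ha Hb.
    rewrite nth_error_map in Ha, Hb.
    destruct (nth_error Es i) as [Ei|] eqn:Ei'; [|discriminate].
    destruct (nth_error Es (S i)) as [Ej|] eqn:Ej'; [|discriminate].
    injection Ha as <-. injection Hb as <-.
    split; [eapply Dne; eauto|split; [eapply Dne; eauto|]].
    intros x y Hx Hy. apply In_Dl in Hx, Hy. apply (Hc i Ei Ej); auto. }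
  destruct (nth_error Es 0) as [E0|] eqn:HE0.
  2:{ apply nth_error_None in HE0. lia. }
  assert (RD : forall b Eb, nth_error Es b = Some Eb -> blt lt R (Dl R Eb)).
  { intros b Eb Hb x y Hx Hy. destruct b as [|b].
    - rewrite HE0 in Hb. injection Hb as <-. apply In_Dl in Hy.
      apply (H0 E0); auto.
    - assert (bltne lt (Dl R E0) (Dl R Eb)) as (Ne&_&Bl).
      { apply (ss_nth_lt _ _ SB 0 (S b)); try lia; rewrite nth_error_map.
        rewrite HE0; reflexivity. rewrite Hb; reflexivity. }
      destruct (Dl R E0) as [|z l] eqn:Hz; [congruence|].
      assert (In z (Dl R E0)) by (rewrite Hz; left; auto).
      apply In_Dl in H as [zE0 zR].
      apply trn with z. apply (H0 E0); auto. apply Bl; auto. left; auto. }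
  assert (Part1 : forall b Eb, nth_error Es b = Some Eb ->
      Eb = R ++ Dl R Eb /\ length (Dl R Eb) = tm t k - tr t (S k)).
  { intros b Eb Hb.
    assert (Eq : Eb = R ++ Dl R Eb).
    { apply (ss_eq lt irr trn).
      - exact (rank_incr lt t Fam HCS _ _ (Hrank _ _ Hb)).
      - apply ss_app. repeat split; auto. apply ss_filter.
        exact (rank_incr lt t Fam HCS _ _ (Hrank _ _ Hb)). apply RD with b; auto.
      - intros x. rewrite in_app_iff, In_Dl. split.
        + intros Hx. destruct (classic (In x R)); auto.
        + intros [Hx|[Hx _]]; auto. apply (Rsub b Eb Hb); auto. }
    split; auto.
    pose proof (rank_len lt t Fam HCS _ _ (Hrank _ _ Hb)). rewrite Eq in H at 1.
    rewrite length_app, HLR in H. lia. }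
  split; [exact Part1|]. split; [|split; auto].
  apply (ss_eq lt irr trn).
  - exact (rank_incr lt t Fam HCS _ _ HE).
  - apply ss_app. repeat split; auto.
    + apply ss_concat.
      * rewrite Forall_forall. intros d Hd. apply in_map_iff in Hd as (Eb&<-&HEb).
        apply ss_filter. apply In_nth_error in HEb as (b&Hb).
        exact (rank_incr lt t Fam HCS _ _ (Hrank _ _ Hb)).
      * apply (ss_weaken (bltne lt)); [|exact SB]. intros a b (_&_&Hab); exact Hab.
    + intros x y Hx Hy. apply in_concat in Hy as (d&Hd&Hy).
      apply in_map_iff in Hd as (Eb&<-&HEb). apply In_nth_error in HEb as (b&Hb).
      apply (RD b Eb Hb); auto.
  - intros x. rewrite in_app_iff, HU. split.
    + intros (Eb&HEb&Hx). destruct (classic (In x R)); auto. right.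
      apply in_concat. exists (Dl R Eb). split. apply in_map; auto. apply In_Dl; auto.
    + intros [Hx|Hx].
      * exists E0. split. eapply nth_error_In; eauto. apply (Rsub 0); auto.
      * apply in_concat in Hx as (d&Hd&Hx). apply in_map_iff in Hd as (Eb&<-&HEb).
        apply In_Dl in Hx. exists Eb; tauto.
Qed.

Lemma invariance k : forall E E' j x x', rank Fam E k -> rank Fam E' k ->
  nth_error E j = Some x -> nth_error E' j = Some x' ->
  forall k' p, k' <= k -> pos Fam k' x p -> pos Fam k' x' p.
Proof.
  induction k as [|k IH]; intros E E' j x x' HE HE' Hx Hx' k' p Hk Hp.
  - assert (k' = 0) by lia. subst.
    assert (p = j) by (apply (pos_unique lt irr trn t Fam HCS 0 x); auto; exists E; auto).
    subst. exists E'; auto.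
  - destruct (Nat.eq_dec k' (S k)) as [->|Hne].
    { assert (p = j) by (apply (pos_unique lt irr trn t Fam HCS (S k) x); auto; exists E; auto).
      subst. exists E'; auto. }
    destruct HCS as (_&_&_&_&C5).
    destruct (C5 _ _ HE) as (Es&R&HD&_). destruct (C5 _ _ HE') as (Es'&R'&HD'&_).
    destruct (decomp_struct _ _ _ _ HE HD) as (P1&P2&P3&P4).
    destruct (decomp_struct _ _ _ _ HE' HD') as (Q1&Q2&Q3&Q4).
    assert (HB : nth_error (concat (R :: map (Dl R) Es)) j = Some x) by (simpl; rewrite <- P2; auto).
    assert (HLB : length (R :: map (Dl R) Es) = length (R' :: map (Dl R') Es')).
    { simpl. rewrite !length_map. lia. }
    assert (HDB : forall i d d', nth_error (R :: map (Dl R) Es) i = Some d ->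
       nth_error (R' :: map (Dl R') Es') i = Some d' -> length d = length d').
    { intros [|i] d d' Hd Hd'; simpl in Hd, Hd'.
      * injection Hd as <-. injection Hd' as <-. lia.
      * rewrite nth_error_map in Hd, Hd'.
        destruct (nth_error Es i) as [Ei|] eqn:HEi; [|discriminate].
        destruct (nth_error Es' i) as [Ei'|] eqn:HEi'; [|discriminate].
        injection Hd as <-. injection Hd' as <-.
        rewrite (proj2 (P1 _ _ HEi)), (proj2 (Q1 _ _ HEi')). reflexivity. }
    destruct (concat_blocks _ _ HLB HDB j x HB) as (a&d&d'&t0&Ha&Ha'&Hd&Hd').
    { simpl in Hd'. rewrite <- Q2, Hx' in Hd'. symmetry in Hd'.
      assert (Hlt : 2 <= tn t (S k)) by (destruct Ht as (_&T2&_); apply T2; lia).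
      destruct a as [|b]; simpl in Ha, Ha'.
      * injection Ha as <-. injection Ha' as <-.
        destruct (nth_error Es 0) as [E0|] eqn:HE0.
        2:{ apply nth_error_None in HE0. lia. }
        destruct (nth_error Es' 0) as [E0'|] eqn:HE0'.
        2:{ apply nth_error_None in HE0'. lia. }
        assert (t0 < length R) by (apply nth_error_Some; congruence).
        apply (IH E0 E0' t0 x x').
        -- apply (decomp_rank _ _ _ _ _ _ _ _ HD). eapply nth_error_In; eauto.
        -- apply (decomp_rank _ _ _ _ _ _ _ _ HD'). eapply nth_error_In; eauto.
        -- rewrite (proj1 (P1 _ _ HE0)), nth_error_app1; auto.
        -- rewrite (proj1 (Q1 _ _ HE0')), nth_error_app1; auto. lia.
        -- lia.
        -- auto.
      * rewrite nth_error_map in Ha, Ha'.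
        destruct (nth_error Es b) as [Eb|] eqn:HEb; [|discriminate].
        destruct (nth_error Es' b) as [Eb'|] eqn:HEb'; [|discriminate].
        injection Ha as <-. injection Ha' as <-.
        apply (IH Eb Eb' (length R + t0) x x').
        -- apply (decomp_rank _ _ _ _ _ _ _ _ HD). eapply nth_error_In; eauto.
        -- apply (decomp_rank _ _ _ _ _ _ _ _ HD'). eapply nth_error_In; eauto.
        -- rewrite (proj1 (P1 _ _ HEb)), nth_error_app2 by lia.
           replace (length R + t0 - length R) with t0 by lia. auto.
        -- rewrite (proj1 (Q1 _ _ HEb')), nth_error_app2 by lia.
           replace (length R + t0 - length R') with t0 by lia. auto.
        -- lia.
        -- auto. }
Qed.

End Scheme3.

Definition code (k i : nat) : nat := Cantor.to_nat (k, i).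

Lemma code_mono k i K I : k <= K -> i <= I -> code k i <= code K I.
Proof. intros. unfold code. pose proof (Cantor.to_nat_spec k i). pose proof (Cantor.to_nat_spec K I). nia. Qed.

Lemma code_ge k i : k <= code k i.
Proof. unfold code. pose proof (Cantor.to_nat_non_decreasing k i). lia. Qed.

Lemma code_inj k i k' i' : code k i = code k' i' -> k = k' /\ i = i'.
Proof. unfold code. intros H. apply Cantor.to_nat_inj in H. injection H; auto. Qed.

Lemma almost_psub_irr X : almost_psub X X -> False.
Proof. intros [_ H]. destruct (H 0) as (m&_&A&B). auto. Qed.

Lemma almost_psub_asym X Y : almost_psub X Y -> almost_psub Y X -> False.
Proof.
  intros [(n&Hn) _] [_ H]. destruct (H n) as (m&nm&A). specialize (Hn m A). lia.
Qed.

Section Main.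
Context {W : Type} (lt : W -> W -> Prop).
Hypothesis irr : forall x, ~ lt x x.
Hypothesis trn : forall x y z, lt x y -> lt y z -> lt x z.
Context (t : cs_type) (Ht : is_type t) (Fam : list W -> Prop)
  (HCS : construction_scheme lt t Fam).
Hypothesis Hunc : uncountable (fun _ : W => True).

Definition Aset (a : W) : nat -> Prop :=
  fun n => exists k i j, n = code k i /\ pos Fam k a j /\ i <= j.

Lemma pos_exists a k : exists j, pos Fam k a j.
Proof.
  destruct (level lt irr t Ht Fam HCS Hunc a k) as (G&HG&aG).
  apply In_nth_error in aG as (j&Hj). exists j, G; auto.
Qed.

Lemma pos_bound k a j : pos Fam k a j -> j < tm t k.
Proof.
  intros (G&HG&Hj). rewrite <- (rank_len lt t Fam HCS _ _ HG). apply nth_error_Some; congruence.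
Qed.

Lemma together_pos a b : lt a b -> exists K, forall k, K <= k ->
  exists i0 j0, pos Fam k a i0 /\ pos Fam k b j0 /\ i0 < j0.
Proof.
  intros ab. destruct (exists_high lt irr t Ht Fam HCS Hunc [a; b] 0) as (H&m&Hm&_&Hi).
  exists m. intros k mk.
  destruct (together lt irr t Ht Fam HCS Hunc a b H m k ab Hm) as (G&HG&aG&bG); auto.
  - apply Hi; simpl; auto.
  - apply Hi; simpl; auto.
  - apply In_nth_error in aG as (i0&Hi0). apply In_nth_error in bG as (j0&Hj0).
    exists i0, j0. split; [exists G; auto|split; [exists G; auto|]].
    apply (ss_nth_order lt irr trn G (rank_incr lt t Fam HCS _ _ HG) i0 j0 a b); auto.
Qed.

Lemma Aset_psub a b : lt a b -> almost_psub (Aset a) (Aset b).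
Proof.
  intros ab. destruct (together_pos a b ab) as (K&HK). split.
  - exists (S (code K (tm t K))). intros n [(k&i&j&->&Hp&ij) Hn].
    destruct (Nat.le_gt_cases K k) as [Kk|kK].
    + exfalso. destruct (HK k Kk) as (i0&j0&P1&P2&P3).
      assert (j = i0) by (apply (pos_unique lt irr trn t Fam HCS k a); auto). subst.
      apply Hn. exists k, i, j0. repeat split; auto. lia.
    + pose proof (pos_bound _ _ _ Hp). pose proof (tm_mono t Ht k K ltac:(lia)).
      pose proof (code_mono k i K (tm t K) ltac:(lia) ltac:(lia)). lia.
  - intros n. destruct (HK (Nat.max n K) ltac:(lia)) as (i0&j0&P1&P2&P3).
    exists (code (Nat.max n K) j0). split; [pose proof (code_ge (Nat.max n K) j0); lia|].
    split.
    + exists (Nat.max n K), j0, j0. repeat split; auto.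
    + intros (k'&i'&j'&E&Hp&ij). apply code_inj in E as [<- <-].
      assert (j' = i0) by (apply (pos_unique lt irr trn t Fam HCS (Nat.max n K) a); auto). lia.
Qed.

Hypothesis tri : forall x y, lt x y \/ x = y \/ lt y x.

Lemma Aset_lt a b : almost_psub (Aset a) (Aset b) -> lt a b.
Proof.
  intros H. destruct (tri a b) as [?|[->|ba]]; auto.
  - exfalso; eapply almost_psub_irr; eauto.
  - exfalso. eapply almost_psub_asym; eauto. apply Aset_psub; auto.
Qed.

Lemma Aset_inj a b : Aset a = Aset b -> a = b.
Proof.
  intros E. destruct (tri a b) as [ab|[->|ba]]; auto; exfalso.
  - pose proof (Aset_psub a b ab). rewrite E in H. eapply almost_psub_irr; eauto.
  - pose proof (Aset_psub b a ba). rewrite E in H. eapply almost_psub_irr; eauto.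
Qed.

Lemma Aset_inf a : infinite_nat (Aset a).
Proof.
  intros n. destruct (pos_exists a n) as (j&Hj). exists (code n 0).
  split; [apply code_ge|]. exists n, 0, j. repeat split; auto. lia.
Qed.

Hypothesis Hwf : well_founded lt.
Hypothesis Hseg : forall x, countable (fun y => lt y x).
Hypothesis Hcap : n_capturing lt Fam t 2.

Lemma main_sec : exists T : (nat -> Prop) -> Prop, omega1_pretower T /\ suslin T.
Proof.
  assert (inhW : inhabited W).
  { apply NNPP. intros Hn. apply Hunc. exists (fun _ => 0). intros x. exfalso; apply Hn; constructor; auto. }
  set (T := fun A => exists a, A = Aset a).
  set (ch := fun A => epsilon inhW (fun a => A = Aset a)).
  assert (chP : forall A, T A -> A = Aset (ch A)).
  { intros A (a&Ha). unfold ch. apply (epsilon_spec inhW (fun a => A = Aset a)). eauto. }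
  exists T. split; [split; [|split; [|split; [|split]]]|].
  - intros A (a&->). apply Aset_inf.
  - intros A B (a&->) (b&->) Hne. destruct (tri a b) as [ab|[->|ba]].
    + left; apply Aset_psub; auto.
    + congruence.
    + right; apply Aset_psub; auto.
  - assert (HA : forall a, Acc (fun A B => T A /\ T B /\ almost_psub A B) (Aset a)).
    { intros a. induction (Hwf a) as [a _ IH]. constructor.
      intros B (TB&_&HB). destruct TB as (y&->). apply IH. apply Aset_lt; auto. }
    intros A. destruct (classic (T A)) as [(a&->)|nT]; auto.
    constructor. intros B (_&TA&_). contradiction.
  - intros (f&Hf). apply Hunc. exists (fun a => f (Aset a)).
    intros x y _ _ E. apply Aset_inj. apply Hf; auto; red; eauto.
  - intros A (a&->). destruct (Hseg a) as (g&Hg).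
    exists (fun B => g (ch B)). intros B1 B2 (T1&H1) (T2&H2) E.
    assert (L1 : lt (ch B1) a) by (apply Aset_lt; rewrite <- (chP B1 T1); auto).
    assert (L2 : lt (ch B2) a) by (apply Aset_lt; rewrite <- (chP B2 T2); auto).
    rewrite (chP B1 T1), (chP B2 T2). f_equal. apply Hg; auto.
  - intros AA HAA Hu.
    set (S := fun c : list W => exists a, c = [a] /\ AA (Aset a)).
    assert (SI : forall c, S c -> incr lt c).
    { intros c (a&->&_). repeat constructor. }
    assert (SU : uncountable S).
    { intros (f&Hf). apply Hu. exists (fun A => f [ch A]).
      intros A B HA HB E.
      assert (TA : T A) by auto. assert (TB : T B) by auto.
      assert (Hc : [ch A] = [ch B]).
      { apply Hf; auto.
        - exists (ch A); split; auto. rewrite <- (chP A TA); auto.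
        - exists (ch B); split; auto. rewrite <- (chP B TB); auto. }
      injection Hc as Hc. rewrite (chP A TA), (chP B TB), Hc. reflexivity. }
    destruct (Hcap S SI SU 0) as (C&l&F&NC&LC&FC&l0&Hcapt).
    destruct Hcapt as (l1&HF&_&_&Fs&R&HD&cs&Pcs&Hcs).
    assert (Lcs : length cs = 2) by (rewrite <- (Permutation_length Pcs); auto).
    assert (NDcs : NoDup cs) by (eapply Permutation_NoDup; eauto).
    assert (Scs : forall c, In c cs -> S c).
    { intros c Hc. rewrite Forall_forall in FC. apply FC. apply Permutation_sym in Pcs.
      eapply Permutation_in; eauto. }
    destruct cs as [|c0 [|c1 [|? ?]]]; simpl in Lcs; try discriminate.
    destruct (Scs c0 (or_introl eq_refl)) as (a&->&Aa).
    destruct (Scs c1 (or_intror (or_introl eq_refl))) as (b&->&Ab).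
    destruct (Hcs 0 [a] eq_refl) as (F0&HF0&I0&(x0&Hx0&Rx0)&_).
    destruct (Hcs 1 [b] eq_refl) as (F1&HF1&I1&(x1&Hx1&Rx1)&c0'&F0'&Hc0'&HF0'&Hphi).
    simpl in Hc0'. injection Hc0' as <-. rewrite HF0 in HF0'. injection HF0' as <-.
    destruct Hx0 as [<-|[]]. destruct Hx1 as [<-|[]].
    destruct (proj1 (Hphi b) (or_introl eq_refl)) as (j&y&Hj0&Hy&Hj1).
    destruct Hy as [->|[]].
    assert (ab : lt y b).
    { pose proof HD as (_&_&_&_&_&_&_&Hc). apply (Hc 0 F0 F1); auto; split; auto;
        [apply I0|apply I1]; left; auto. }
    exists (Aset y), (Aset b). split; [auto|split; [auto|split]].
    + intros E. apply Aset_inj in E. subst. apply (irr b); auto.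
    + intros n (k&i&p&->&Hp&ip).
      assert (F0r : rank Fam F0 (l - 1)).
      { apply (decomp_rank _ _ _ _ _ _ _ _ HD). eapply nth_error_In; eauto. }
      assert (F1r : rank Fam F1 (l - 1)).
      { apply (decomp_rank _ _ _ _ _ _ _ _ HD). eapply nth_error_In; eauto. }
      destruct (Nat.le_gt_cases k (l - 1)) as [kl|kl].
      * exists k, i, p. repeat split; auto.
        apply (invariance lt irr trn t Ht Fam HCS (l - 1) F0 F1 j y b); auto.
      * assert (yF : In y F).
        { apply (decomp_incl _ _ _ _ _ _ _ F0 HD). eapply nth_error_In; eauto. apply I0; left; auto. }
        assert (bF : In b F).
        { apply (decomp_incl _ _ _ _ _ _ _ F1 HD). eapply nth_error_In; eauto. apply I1; left; auto. }
        destruct (together lt irr t Ht Fam HCS Hunc y b F l k ab HF yF bF ltac:(lia)) as (G&HG&yG&bG).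
        apply In_nth_error in yG as (i0&Gi0). apply In_nth_error in bG as (j0&Gj0).
        assert (i0 < j0) by (apply (ss_nth_order lt irr trn G (rank_incr lt t Fam HCS _ _ HG) i0 j0 y b); auto).
        assert (p = i0) by (apply (pos_unique lt irr trn t Fam HCS k y); auto; exists G; auto).
        exists k, i, j0. repeat split; auto. exists G; auto. lia.
Qed.

End Main.

Definition myr (k : nat) : nat := match k with 0 => 0 | S k' => fst (Cantor.of_nat k') end.
Fixpoint mym (k : nat) : nat := match k with 0 => 1 | S k' => myr (S k') + (mym k' - myr (S k')) * 2 end.
Definition myt : cs_type := {| tm := mym; tn := fun _ => 2; tr := myr |}.

Lemma myr_le k : myr (S k) <= k.
Proof.
  unfold myr. pose proof (Cantor.cancel_to_of k) as E.
  destruct (Cantor.of_nat k) as [x y]. simpl.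
  pose proof (Cantor.to_nat_non_decreasing x y). lia.
Qed.

Lemma mym_ge k : S k <= mym k.
Proof.
  induction k; [simpl; lia|].
  change (mym (S k)) with (myr (S k) + (mym k - myr (S k)) * 2).
  pose proof (myr_le k). lia.
Qed.

Lemma myt_type : is_type myt.
Proof.
  split; [reflexivity|]. split; [simpl; lia|]. split; [|split].
  - intros r N. exists (S (Cantor.to_nat (r, N))). change (N <= S (Cantor.to_nat (r, N)) /\ fst (Cantor.of_nat (Cantor.to_nat (r, N))) = r). rewrite Cantor.cancel_of_to. simpl.
    pose proof (Cantor.to_nat_non_decreasing r N). split; [lia|reflexivity].
  - intros k. change (myr (S k) < mym k). pose proof (myr_le k). pose proof (mym_ge k). lia.
  - intros k. reflexivity.
Qed.

Theorem mainTheorem13 (W : Type) (lt : W -> W -> Prop) :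
  omega1_like lt -> CA lt 2 ->
  exists T : (nat -> Prop) -> Prop, omega1_pretower T /\ suslin T.
Proof.
  intros (irr&trn&tri&wf&unc&seg) HCA.
  destruct (HCA myt myt_type) as (Fam&HCS&Hcap).
  { intros k _. simpl. lia. }
  exact (main_sec lt irr trn myt myt_type Fam HCS unc tri wf seg Hcap).
Qed.
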